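(* There exist connected graphs $G$ and integers $k$ with $k-1\ge\chi(G)$ for which $\underline{\mathrm{lcs}}(G,k)<\underline{\mathrm{lcs}}(G,k-1)$; that is, $\underline{\mathrm{lcs}}(G,k)$ is not in general monotone non-decreasing in $k$.
   Context: All graphs are finite and simple. For a graph $G=(V,E)$ and an integer $k\ge\chi(G)$, a proper $k$-colouring is a map $c:V\to[k]$ with $c(u)\neq c(v)$ for every edge $uv$. A set $S\subseteq V$ is a determining set for $(G,c)$ if there is no proper $k$-colouring $c'\neq c$ with $c'(s)=c(s)$ for all $s\in S$; a critical set is an inclusion-minimal determining set. $\mathrm{lcs}(G,c)$ is the size of a largest critical set for $(G,c)$, and $\underline{\mathrm{lcs}}(G,k)$ is the minimum of $\mathrm{lcs}(G,c)$ over all proper $k$-colourings $c$ of $G$. *)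

(* Defs.v *)
From mathcomp Require Import all_boot.
Set Implicit Arguments. Unset Strict Implicit. Unset Printing Implicit Defensive.

Section Colourings.
Variable T : finType.

Definition simple_graph (e : rel T) : Prop := symmetric e /\ irreflexive e.

Definition connected_graph (e : rel T) : bool :=
  (0 < #|T|) && [forall x, forall y, connect e x y].

Definition proper (e : rel T) (k : nat) (c : {ffun T -> 'I_k}) : bool :=
  [forall u, forall v, e u v ==> (c u != c v)].

Definition colourable (e : rel T) (k : nat) : bool :=
  [exists c : {ffun T -> 'I_k}, proper e c].

(* chromatic number: least k admitting a proper k-colouring
   (T is always #|T|-colourable, so the range bound is harmless). *)
Definition chromatic (e : rel T) : nat :=
  \big[minn/#|T|]_(j < #|T|.+1 | colourable e j) j.

Definition determining (e : rel T) (k : nat) (c : {ffun T -> 'I_k})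
  (S : {set T}) : bool :=
  [forall c' : {ffun T -> 'I_k},
     (proper e c' && (c' != c)) ==> [exists s in S, c' s != c s]].

Definition critical (e : rel T) (k : nat) (c : {ffun T -> 'I_k})
  (S : {set T}) : bool :=
  minset (determining e c) S.

Definition lcs (e : rel T) (k : nat) (c : {ffun T -> 'I_k}) : nat :=
  \max_(S : {set T} | critical e c S) #|S|.

(* lower lcs(G,k): minimum of lcs(G,c) over proper k-colourings c.
   Default #|T| only matters if no proper k-colouring exists (k < chi). *)
Definition lower_lcs (e : rel T) (k : nat) : nat :=
  \big[minn/#|T|]_(c : {ffun T -> 'I_k} | proper e c) lcs e c.

End Colourings.

(* Main.v *)
Require Import Defs.
From mathcomp Require Import all_boot.
Set Implicit Arguments. Unset Strict Implicit. Unset Printing Implicit Defensive.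

Definition E : seq (nat*nat) :=
  [:: (0,1);(0,2);(0,3);(0,4);(0,6);(1,2);(1,4);(1,6);(2,4);(2,5);(3,5);(4,5);(5,6)].
Definition eG : rel 'I_7 := fun x y => ((val x, val y) \in E) || ((val y, val x) \in E).

Definition properN (d : seq nat) : bool := all (fun p => nth 0 d p.1 != nth 0 d p.2) E.

Fixpoint allL (T : Type) (xs : seq T) (n : nat) : seq (seq T) :=
  if n is n'.+1 then [seq x :: l | x <- xs, l <- allL xs n'] else [:: [::]].

Lemma mem_allL (T : eqType) (xs : seq T) n l :
  (l \in allL xs n) = (size l == n) && all (fun x => x \in xs) l.
Proof.
elim: n l => [|n IH] [|x l] //=.
- by apply/negbTE/allpairsP => -[[a b] [_ _ //]].
- apply/allpairsP/idP => [[[a b] [Ha Hb [-> ->]]]|/andP[Hs /andP[Hx Ha]]].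
    by move: Hb; rewrite IH eqSS /= Ha => /andP[-> ->].
  by exists (x, l); split => //; rewrite IH -eqSS Hs Ha.
Qed.

Definition toL k (c : {ffun 'I_7 -> 'I_k}) : seq nat :=
  map (fun i => val (c (inord i))) (iota 0 7).

Lemma size_toL k (c : {ffun 'I_7 -> 'I_k}) : size (toL c) = 7.
Proof. by rewrite size_map size_iota. Qed.

Lemma nth_toL k (c : {ffun 'I_7 -> 'I_k}) i : i < 7 -> nth 0 (toL c) i = val (c (inord i)).
Proof. by move=> Hi; rewrite (nth_map 0) ?size_iota // nth_iota. Qed.

Lemma toL_inj k (c c' : {ffun 'I_7 -> 'I_k}) : toL c = toL c' -> c = c'.
Proof.
move=> H; apply/ffunP => x; apply: val_inj.
by have := congr1 (fun s => nth 0 s (nat_of_ord x)) H; rewrite /= !nth_toL // inord_val.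
Qed.

Definition mkcol K (l : seq nat) : {ffun 'I_7 -> 'I_K.+1} := [ffun x : 'I_7 => inord (nth 0 l x)].

Lemma toL_mk K l : size l = 7 -> all (fun x => x < K.+1) l -> toL (mkcol K l) = l.
Proof.
move=> Hs Ha; apply: (eq_from_nth (x0 := 0)); first by rewrite size_toL Hs.
move=> i; rewrite size_toL => Hi; rewrite nth_toL // ffunE; change (nat_of_ord (inord (nth 0 l (nat_of_ord (inord i : 'I_7))) : 'I_K.+1) = nth 0 l i); rewrite (inordK Hi) inordK //.
apply: (allP Ha); apply: mem_nth; by rewrite Hs.
Qed.

Lemma Eok : all (fun p => (p.1 < 7) && (p.2 < 7)) E.
Proof. by []. Qed.

Lemma proper_toL k (c : {ffun 'I_7 -> 'I_k}) : Defs.proper eG c = properN (toL c).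
Proof.
apply/idP/idP.
- move/forallP => H; apply/allP => -[a b] Hab.
  have /andP[Ha Hb] := allP Eok _ Hab.
  have := implyP (forallP (H (inord a)) (inord b)).
  rewrite /eG /= !inordK // Hab /= => /(_ isT) Hne.
  by rewrite /= !nth_toL.
- move/allP => H; apply/forallP => u; apply/forallP => v; apply/implyP.
  rewrite /eG => /orP[] Huv; have := H _ Huv; rewrite /= !nth_toL // !inord_val //.
  by rewrite eq_sym.
Qed.

Definition pp (l : seq nat) : bool :=
  all (fun p => ((p.1 < size l) && (p.2 < size l)) ==> (nth 0 l p.1 != nth 0 l p.2)) E.

Fixpoint genL (k n : nat) : seq (seq nat) :=
  if n is n'.+1 then [seq l <- [seq rcons l x | l <- genL k n', x <- iota 0 k] | pp l]
  else [:: [::]].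

Lemma pp_rcons l x : pp (rcons l x) -> pp l.
Proof.
move/allP => H; apply/allP => -[a b] Hab; apply/implyP => /andP[]; rewrite /= => Ha Hb.
have := implyP (H _ Hab); rewrite /= size_rcons !ltnS (ltnW Ha) (ltnW Hb) !nth_rcons Ha Hb; by apply.
Qed.

Lemma mem_genL k n l :
  (l \in genL k n) = (size l == n) && all (fun x => x \in iota 0 k) l && pp l.
Proof.
elim: n l => [|n IH] l.
  by case: l => [|x l] //=; rewrite /pp; apply/esym; apply/allP => -[a b].
case/lastP: l => [|l x] /=.
  rewrite mem_filter; apply/negbTE/negP => /andP[_ /allpairsP [[l' x'] [_ _ /= Heq]]].
  by case: l' Heq => [|? ?].
rewrite mem_filter size_rcons eqSS all_rcons.
apply/andP/idP => [[Hp /allpairsP [[l' x'] [Hl' Hx' /= Heq]]]|].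
  have [El Ex] : l = l' /\ x = x'.
    by case: (rcons_inj Heq).
  subst; move: Hl'; rewrite IH => /andP[/andP[-> ->] _]; by rewrite Hx' Hp.
case/andP => /andP[Hs /andP[Hx Hl]] Hp; split => //.
apply/allpairsP; exists (l, x); split => //.
by rewrite IH Hs Hl (pp_rcons Hp).
Qed.

Definition Lk k := genL k 7.

Lemma mem_Lk k d : (d \in Lk k) = (size d == 7) && all (fun x => x \in iota 0 k) d && properN d.
Proof.
rewrite /Lk mem_genL; case Hs: (size d == 7) => //=; congr andb.
rewrite /pp (eqP Hs); apply: eq_in_all => -[a b] Hab /=.
have /andP[Ha Hb] := allP Eok _ Hab.
by rewrite Ha Hb.
Qed.

Lemma toL_in_Lk k (c : {ffun 'I_7 -> 'I_k}) : Defs.proper eG c -> toL c \in Lk k.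
Proof.
move=> Hp; rewrite mem_Lk -proper_toL Hp size_toL eqxx andbT andTb.
by apply/allP => x /mapP[i _ ->]; rewrite mem_iota add0n ltn_ord.
Qed.

Definition bits (S : {set 'I_7}) : seq bool := [seq (inord i : 'I_7) \in S | i <- iota 0 7].

Lemma nth_bits S i : i < 7 -> nth false (bits S) i = ((inord i : 'I_7) \in S).
Proof. by move=> Hi; rewrite (nth_map 0) ?size_iota // nth_iota. Qed.

Lemma size_bits S : size (bits S) = 7.
Proof. by rewrite size_map size_iota. Qed.

Definition detB (L : seq (seq nat)) (cL : seq nat) (b : seq bool) : bool :=
  all (fun d => (d == cL) || has (fun i => nth false b i && (nth 0 d i != nth 0 cL i)) (iota 0 7)) L.

Lemma det_transfer K (c : {ffun 'I_7 -> 'I_K.+1}) S :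
  determining eG c S = detB (Lk K.+1) (toL c) (bits S).
Proof.
apply/idP/idP.
- move/forallP => H; apply/allP => d; rewrite mem_Lk => /andP[/andP[Hs Ha] Hp].
  apply/orP; case: (eqVneq d (toL c)) => [->|Hne]; [by left|right].
  have Ha' : all (fun x => x < K.+1) d.
    by apply/allP => x Hx; have := allP Ha x Hx; rewrite mem_iota.
  have Htl : toL (mkcol K d) = d by apply: toL_mk => //; apply/eqP.
  have Hpc : Defs.proper eG (mkcol K d) by rewrite proper_toL Htl.
  have Hcc : mkcol K d != c by apply: contra_neq Hne => <-; rewrite Htl.
  have := implyP (H (mkcol K d)); rewrite Hpc Hcc => /(_ isT) /existsP [s /andP[Hs' Hn]].
  apply/hasP; exists (nat_of_ord s); first by rewrite mem_iota /=.
  rewrite nth_bits // inord_val Hs' /= -{1}Htl !nth_toL // inord_val.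
  by rewrite val_eqE.
- move=> /allP H; apply/forallP => c'; apply/implyP => /andP[Hp Hne].
  have := H _ (toL_in_Lk Hp); case/orP => [/eqP Heq|/hasP [i Hi /andP[Hb Hd]]].
    by rewrite (toL_inj Heq) eqxx in Hne.
  move: Hi; rewrite mem_iota /= => Hi.
  apply/existsP; exists (inord i); rewrite -nth_bits // Hb /=.
  by rewrite !nth_toL // val_eqE in Hd.
Qed.

Lemma det_mono k (c : {ffun 'I_7 -> 'I_k}) (S S' : {set 'I_7}) :
  S \subset S' -> determining eG c S -> determining eG c S'.
Proof.
move=> sub /forallP H; apply/forallP => c'; apply/implyP => Hc.
have /existsP[s /andP[Hs Hn]] := implyP (H c') Hc.
by apply/existsP; exists s; rewrite (subsetP sub _ Hs) Hn.
Qed.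

Lemma critE k (c : {ffun 'I_7 -> 'I_k}) S :
  critical eG c S = determining eG c S && [forall x in S, ~~ determining eG c (S :\ x)].
Proof.
apply/idP/idP.
- move/minsetP => [Hd Hmin]; rewrite Hd /=.
  apply/forallP => x; apply/implyP => Hx; apply/negP => Hdx.
  have Heq := Hmin _ Hdx (subsetDl S [set x]).
  have : x \in S :\ x by rewrite Heq.
  by rewrite setD11.
- case/andP => Hd /forallP Hall; apply/minsetP; split => // B HB sub.
  apply/eqP; rewrite eqEsubset sub /=; apply/subsetP => x Hx.
  apply/negPn/negP => HxB.
  have := implyP (Hall x) Hx => /negP; apply; apply: det_mono HB.
  apply/subsetP => y Hy; rewrite !inE; apply/andP; split; last exact: subsetP sub y Hy.
  by apply/eqP => Eyx; rewrite -Eyx Hy in HxB.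
Qed.

Definition critB (L : seq (seq nat)) (cL : seq nat) (b : seq bool) : bool :=
  detB L cL b && all (fun i => nth false b i ==> ~~ detB L cL (set_nth false b i false)) (iota 0 7).

Lemma bits_setD1 S (x : 'I_7) : bits (S :\ x) = set_nth false (bits S) (nat_of_ord x) false.
Proof.
apply: (eq_from_nth (x0 := false)).
  by rewrite size_set_nth size_bits size_bits; apply/esym/maxn_idPr; exact: ltn_ord.
move=> i; rewrite size_bits => Hi; rewrite nth_set_nth /= !nth_bits // in_setD1.
case: (eqVneq i (nat_of_ord x)) => [->|Hne]; first by rewrite inord_val eqxx.
have -> // : (inord i : 'I_7) != x.
by apply/eqP => Ex; rewrite -Ex inordK // eqxx in Hne.
Qed.

Lemma crit_transfer K (c : {ffun 'I_7 -> 'I_K.+1}) (S : {set 'I_7}) :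
  critical eG c S = critB (Lk K.+1) (toL c) (bits S).
Proof.
rewrite critE det_transfer /critB; congr andb.
apply/forallP/allP.
- move=> H i; rewrite mem_iota => /andP[_ Hi]; rewrite nth_bits //; apply/implyP => Hin.
  have := implyP (H (inord i)) Hin.
  by rewrite det_transfer bits_setD1 inordK.
- move=> H x; apply/implyP => Hx.
  have Hx7 : nat_of_ord x \in iota 0 7 by rewrite mem_iota /=.
  have := implyP (H _ Hx7).
  rewrite nth_bits // inord_val Hx => /(_ isT).
  by rewrite det_transfer bits_setD1.
Qed.

Lemma card_bits (S : {set 'I_7}) : #|S| = count id (bits S).
Proof.
rewrite cardE {1}/enum_mem size_filter /bits count_map -val_enum_ord count_map enumT.
by apply: eq_count => x /=; rewrite inord_val.
Qed.

Definition fromBits (b : seq bool) : {set 'I_7} := [set x : 'I_7 | nth false b x].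

Lemma bits_fromBits b : size b = 7 -> bits (fromBits b) = b.
Proof.
move=> Hs; apply: (eq_from_nth (x0 := false)); first by rewrite size_bits Hs.
by move=> i; rewrite size_bits => Hi; rewrite nth_bits // inE inordK.
Qed.

Lemma bigmin_le (I : finType) (P : pred I) (F : I -> nat) x i0 :
  P i0 -> \big[minn/x]_(i | P i) F i <= F i0.
Proof.
move=> HP; have : i0 \in index_enum I by rewrite mem_index_enum.
elim: (index_enum I) => [//|j r IH].
rewrite inE big_cons => /orP[/eqP <-|Hr]; first by rewrite HP geq_minl.
case: (P j); last exact: IH.
exact: leq_trans (geq_minr _ _) (IH Hr).
Qed.

Lemma bigmin_ge (I : finType) (P : pred I) (F : I -> nat) x m :
  m <= x -> (forall i, P i -> m <= F i) -> m <= \big[minn/x]_(i | P i) F i.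
Proof.
move=> Hx HF; apply: (big_ind (fun v => m <= v)) => // a b Ha Hb.
by rewrite leq_min Ha Hb.
Qed.

Definition allB := allL [:: false; true] 7.

Definition c0L := [:: 0;1;2;1;3;0;4].
Definition c4L := [:: 0;1;2;1;3;0;2].

Fixpoint allF (T : Type) (p : T -> bool) (s : seq T) : bool :=
  if s is x :: s' then (if p x then allF p s' else false) else true.
Fixpoint hasF (T : Type) (p : T -> bool) (s : seq T) : bool :=
  if s is x :: s' then (if p x then true else hasF p s') else false.

Lemma allFE (T : Type) (p : T -> bool) s : allF p s = all p s.
Proof. by elim: s => //= x s ->. Qed.
Lemma hasFE (T : Type) (p : T -> bool) s : hasF p s = has p s.
Proof. by elim: s => //= x s ->. Qed.

Definition detF (L : seq (seq nat)) (cL : seq nat) (b : seq bool) : bool :=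
  allF (fun d => if d == cL then true else
    hasF (fun i => if nth false b i then nth 0 d i != nth 0 cL i else false) (iota 0 7)) L.

Lemma detFE L cL b : detF L cL b = detB L cL b.
Proof. by rewrite /detF allFE; apply: eq_all => d; rewrite hasFE. Qed.

Definition critF (L : seq (seq nat)) (cL : seq nat) (b : seq bool) : bool :=
  if detF L cL b then
    allF (fun i => if nth false b i then ~~ detF L cL (set_nth false b i false) else true) (iota 0 7)
  else false.

Lemma critFE L cL b : critF L cL b = critB L cL b.
Proof.
rewrite /critF /critB detFE allFE; case: (detB L cL b) => //.
by apply: eq_all => i; rewrite detFE.
Qed.


Definition check5 : bool :=
  let L := Lk 5 in
  allF (fun b => if critF L c0L b then count id b <= 4 else true) allB.

Definition check4 : bool :=
  let L := Lk 4 in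
  allF (fun d => hasF (fun b => if 5 <= count id b then critF L d b else false) allB) L.

Lemma check5_ok : check5 = true.
Proof. vm_cast_no_check (erefl true). Qed.

Lemma check4_ok : check4 = true.
Proof. vm_cast_no_check (erefl true). Qed.

Lemma check5E : all (fun b => critB (Lk 5) c0L b ==> (count id b <= 4)) allB.
Proof.
have := check5_ok; rewrite /check5 allFE => H; apply/allP => b Hb.
by have := allP H b Hb; rewrite critFE.
Qed.

Lemma check4E : all (fun d => has (fun b => (5 <= count id b) && critB (Lk 4) d b) allB) (Lk 4).
Proof.
have := check4_ok; rewrite /check4 allFE => H; apply/allP => d Hd.
have := allP H d Hd; rewrite hasFE => /hasP [b Hb Hc]; apply/hasP; exists b => //.
Qed.

Lemma bits_allB S : bits S \in allB.
Proof.
by rewrite /allB mem_allL size_bits eqxx andTb; apply/allP => b _; case: b.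
Qed.

Lemma upper : lower_lcs eG 5 <= 4.
Proof.
have Hs : size c0L = 7 by [].
have Ha : all (fun x => x < 5) c0L by [].
have Htl := toL_mk Hs Ha.
have Hp : Defs.proper eG (mkcol 4 c0L) by rewrite proper_toL Htl.
apply: leq_trans (bigmin_le _ _ Hp) _.
apply/bigmax_leqP => S; rewrite crit_transfer Htl => Hc.
rewrite card_bits.
by have := allP check5E _ (bits_allB S); rewrite Hc => /implyP; apply.
Qed.

Lemma lower : 5 <= lower_lcs eG 4.
Proof.
apply: bigmin_ge; first by rewrite card_ord.
move=> c Hp.
have /hasP [b Hb /andP[Hcnt Hcr]] := allP check4E _ (toL_in_Lk Hp).
have Hsb : size b = 7 by move: Hb; rewrite /allB mem_allL => /andP[/eqP].
apply: leq_trans Hcnt _.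
rewrite -{1}(bits_fromBits Hsb) -card_bits.
apply: leq_bigmax_cond.
by rewrite crit_transfer bits_fromBits.
Qed.

Lemma eG_sym : symmetric eG.
Proof. by move=> x y; rewrite /eG orbC. Qed.

Lemma eG_irr : irreflexive eG.
Proof. by move=> x; rewrite /eG orbb; case: x => [[|[|[|[|[|[|[|m]]]]]]] Hm]. Qed.

Lemma conn0 (z : 'I_7) : connect eG z ord0.
Proof.
case: z => [[|[|[|[|[|[|[|m]]]]]]] Hm] //; try by apply: connect1.
- by rewrite (_ : Ordinal Hm = ord0) //; apply: val_inj.
- by apply: (connect_trans (y := @Ordinal 7 2 isT)); apply: connect1.
Qed.

Lemma colourable4 : colourable eG 4.
Proof.
apply/existsP; exists (mkcol 3 [:: 0;1;2;1;3;0;2]).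
by rewrite proper_toL toL_mk.
Qed.

Theorem theorem7 :
  exists (T : finType) (e : rel T) (k : nat),
    simple_graph e /\ connected_graph e /\
    chromatic e <= k /\ lower_lcs e k.+1 < lower_lcs e k.
Proof.
exists 'I_7, eG, 4; split; first by split; [exact: eG_sym | exact: eG_irr].
split.
  apply/andP; split; first by rewrite card_ord.
  apply/forallP => x; apply/forallP => y.
  apply: connect_trans (conn0 x) _.
  by rewrite (sym_connect_sym eG_sym); exact: conn0.
split; last exact: leq_ltn_trans upper lower.
have H48 : 4 < #|'I_7|.+1 by rewrite card_ord.
exact: (bigmin_le _ _ (i0 := Ordinal H48) colourable4).
Qed.
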